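(* Let $G$ be a simple graph with canonical mixed graph $F$ and let $X,Y$ be as defined in the context. Let $u,v\in X$ be distinct vertices with $uv\notin E(G)$. Then $cM_2(G+uv)\ge cM_2(G)$. Moreover, if $cM_2(G+uv)=cM_2(G)$, then $d_G(u)=d_G(v)$, $d^+_F(u)=d^-_F(u)$ and $d^+_F(v)=d^-_F(v)$.
   Context: All graphs are finite and simple; $d_G(u)$ is the degree of $u$ and $cM_2(G)=\sum_{uv\in E(G)}|d_G(u)^2-d_G(v)^2|$. $G+uv$ denotes $G$ with the edge $uv$ added. The canonical mixed graph $F$ of $G$ has vertex set $V(G)$; for each edge $uv\in E(G)$: if $d_G(u)>d_G(v)$ then $F$ contains the arc $\overrightarrow{uv}$, and if $d_G(u)=d_G(v)$ then $F$ contains the undirected edge $uv$. $d^+_F(u)$ (resp. $d^-_F(u)$) is the number of arcs of $F$ with tail (resp. head) $u$. $X=\{u\in V(G): d^+_F(u)\ge d^-_F(u)\}$ and $Y=\{u\in V(G): d^+_F(u)< d^-_F(u)\}$. *)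

(* Defs.v *)
From mathcomp Require Import all_boot all_order.
Set Implicit Arguments. Unset Strict Implicit. Unset Printing Implicit Defensive.

Definition simple_graph (T : finType) (e : rel T) : Prop :=
  symmetric e /\ irreflexive e.

Definition deg (T : finType) (e : rel T) (u : T) : nat := #|[set w | e u w]|.

Definition add_edge (T : finType) (e : rel T) (u v : T) : rel T :=
  fun x y => [|| e x y, (x == u) && (y == v) | (x == v) && (y == u)].

Definition absdiff (a b : nat) : nat := maxn a b - minn a b.

(* Each undirected edge
   appears twice among the ordered pairs (x,y) with e x y, and the summand is
   symmetric, so we halve the ordered sum (which is always even). *)
Definition cM2 (T : finType) (e : rel T) : nat :=
  (\sum_(x : T) \sum_(y : T | e x y) absdiff (deg e x ^ 2) (deg e y ^ 2)) %/ 2.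

(* canonical mixed graph F: arc x->y iff xy in E(G) and d(x) > d(y). *)
Definition outdegF (T : finType) (e : rel T) (u : T) : nat :=
  #|[set w | e u w && (deg e w < deg e u)]|.
Definition indegF (T : finType) (e : rel T) (u : T) : nat :=
  #|[set w | e u w && (deg e u < deg e w)]|.

Definition inX (T : finType) (e : rel T) (u : T) : bool :=
  indegF e u <= outdegF e u.

(* Main.v *)
Require Import Defs.
From mathcomp Require Import all_boot all_order zify.
Set Implicit Arguments. Unset Strict Implicit.
Lemma key (a z : nat) (c : bool) :
  c * absdiff (a.+1 ^ 2) (z ^ 2) + (c && (a < z)) * (2 * a + 1) =
  c * absdiff (a ^ 2) (z ^ 2) + (c && (z <= a)) * (2 * a + 1).
Proof.
case: c => //=; rewrite !mul1n /absdiff; case: (leqP z a) => h /=.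
- have h1 : z ^ 2 <= a ^ 2 by rewrite leq_exp2r.
  have h2 : z ^ 2 <= a.+1 ^ 2 by rewrite leq_exp2r // ltnW.
  rewrite (maxn_idPl h1) (minn_idPr h1) (maxn_idPl h2) (minn_idPr h2).
  nia.
- have h1 : a ^ 2 <= z ^ 2 by rewrite leq_exp2r // ltnW.
  have h2 : a.+1 ^ 2 <= z ^ 2 by rewrite leq_exp2r.
  rewrite (maxn_idPr h1) (minn_idPl h1) (maxn_idPr h2) (minn_idPl h2).
  nia.
Qed.

Lemma absdiffC m n : absdiff m n = absdiff n m.
Proof. by rewrite /absdiff maxnC minnC. Qed.

Section S.
Variables (T : finType) (e : rel T) (u v : T).
Hypotheses (sym : symmetric e) (irr : irreflexive e) (uv : u != v) (nuv : ~~ e u v).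

Lemma add_edge_out x y : x != u -> x != v -> add_edge e u v x y = e x y.
Proof. by move=> /negbTE xu /negbTE xv; rewrite /add_edge xu xv /= !orbF. Qed.

Lemma deg_other x : x != u -> x != v -> deg (add_edge e u v) x = deg e x.
Proof. by move=> xu xv; rewrite /deg; apply: eq_card => y; rewrite !inE add_edge_out. Qed.

Lemma deg_u : deg (add_edge e u v) u = (deg e u).+1.
Proof.
rewrite /deg (_ : [set w | add_edge e u v u w] = v |: [set w | e u w]).
  by rewrite cardsU1 inE nuv.
by apply/setP=> w; rewrite !inE /add_edge !eqxx (negbTE uv) /= orbF orbC.
Qed.

Lemma deg_v : deg (add_edge e u v) v = (deg e v).+1.
Proof.
have vu : (v == u) = false by rewrite eq_sym (negbTE uv).
rewrite /deg (_ : [set w | add_edge e u v v w] = u |: [set w | e v w]).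
  by rewrite cardsU1 inE sym nuv.
by apply/setP=> w; rewrite !inE /add_edge !eqxx vu /= orbC.
Qed.

Definition F (g : rel T) x y := g x y * absdiff (deg g x ^ 2) (deg g y ^ 2).
Definition Au y := (e u y && (deg e u < deg e y)) * (2 * deg e u + 1).
Definition Qu y := (e u y && (deg e y <= deg e u)) * (2 * deg e u + 1).
Definition Av y := (e v y && (deg e v < deg e y)) * (2 * deg e v + 1).
Definition Qv y := (e v y && (deg e y <= deg e v)) * (2 * deg e v + 1).
Definition N := absdiff ((deg e u).+1 ^ 2) ((deg e v).+1 ^ 2).

Lemma pointwise x y :
  F (add_edge e u v) x y + ((x == u) * Au y + (y == u) * Au x + (x == v) * Av y + (y == v) * Av x)
  = F e x y + ((x == u) * Qu y + (y == u) * Qu x + (x == v) * Qv y + (y == v) * Qv x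
       + (x == u) * (y == v) * N + (x == v) * (y == u) * N).
Proof.
have vu : (v == u) = false by rewrite eq_sym (negbTE uv).
have uvF : (u == v) = false by rewrite (negbTE uv).
have euv : e u v = false by apply/negbTE.
have evu : e v u = false by rewrite sym euv.
have euu : e u u = false by rewrite irr.
have evv : e v v = false by rewrite irr.
rewrite /F /Au /Qu /Av /Qv.
case: (eqVneq x u) => [->|xu]; case: (eqVneq y u) => [->|yu].
- by rewrite /add_edge euu uvF !eqxx /= !(mul0n, muln0, addn0, add0n, mul1n).
- case: (eqVneq y v) => [->|yv].
    by rewrite deg_u deg_v /add_edge euv evu !eqxx uvF /= !(mul0n, muln0, addn0, add0n, mul1n, muln1).
  rewrite deg_u deg_other // /add_edge uvF ?(negbTE yu) ?(negbTE yv) !eqxx /= !orbF.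
  rewrite ?uvF ?vu !(mul0n, muln0, addn0, add0n, mul1n).
  exact: key.
- rewrite ?(negbTE xu); case: (eqVneq x v) => [->|xv].
    by rewrite deg_u deg_v /add_edge evu !eqxx uvF vu /= absdiffC !(mul0n, muln0, addn0, add0n, mul1n, muln1) euv /= !(mul0n, addn0, add0n).
  rewrite deg_u deg_other // add_edge_out // (sym x u) absdiffC (absdiffC (deg e x ^ 2)).
  rewrite ?uvF ?vu !(mul0n, muln0, addn0, add0n, mul1n).
  exact: key.
- rewrite ?(negbTE xu) ?(negbTE yu).
  case: (eqVneq x v) => [->|xv]; case: (eqVneq y v) => [->|yv].
  + by rewrite /add_edge evv vu !eqxx /= !(mul0n, muln0, addn0, add0n, mul1n).
  + rewrite deg_v deg_other // /add_edge vu ?(negbTE yu) ?(negbTE yv) !eqxx /= !orbF.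
    rewrite ?uvF ?vu !(mul0n, muln0, addn0, add0n, mul1n).
    exact: key.
  + rewrite deg_v deg_other // add_edge_out // (sym x v) absdiffC (absdiffC (deg e x ^ 2)).
    rewrite ?uvF ?vu !(mul0n, muln0, addn0, add0n, mul1n).
    exact: key.
  + by rewrite add_edge_out // deg_other // deg_other // !(mul0n, muln0, addn0, add0n).
Qed.



Lemma L1 (w : T) (G : T -> nat) : \sum_(x : T) \sum_(y : T) (x == w) * G y = \sum_y G y.
Proof.
rewrite (bigD1 w) //= [X in _ + X = _]big1 ?addn0.
  by apply: eq_bigr => y _; rewrite eqxx mul1n.
by move=> x /negbTE xw; apply: big1 => y _; rewrite xw.
Qed.

Lemma sum_eq1 (w : T) (G : T -> nat) : \sum_(x : T) (x == w) * G x = G w.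
Proof.
rewrite (bigD1 w) //= eqxx mul1n big1 ?addn0 // => x /negbTE ->; by rewrite mul0n.
Qed.

Lemma L2 (w : T) (G : T -> nat) : \sum_(x : T) \sum_(y : T) (y == w) * G x = \sum_x G x.
Proof. by apply: eq_bigr => x _; rewrite (sum_eq1 w (fun _ => G x)). Qed.

Lemma L3 (w1 w2 : T) (c : nat) : \sum_(x : T) \sum_(y : T) (x == w1) * (y == w2) * c = c.
Proof.
under eq_bigr => x _ do under eq_bigr => y _ do rewrite -mulnA.
by rewrite L1 (sum_eq1 w2 (fun _ => c)).
Qed.

Lemma Ssum (g : rel T) : cM2 g = (\sum_(x : T) \sum_(y : T) F g x y) %/ 2.
Proof.
rewrite /cM2; congr (_ %/ _); apply: eq_bigr => x _; rewrite big_mkcond.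
by apply: eq_bigr => y _; rewrite /F; case: (g x y); rewrite ?mul1n.
Qed.

Lemma sumcard (P : pred T) k : \sum_(y : T) (P y) * k = #|[set y | P y]| * k.
Proof.
rewrite -big_distrl /= -sum1_card; congr (_ * _).
by rewrite [RHS]big_mkcond /=; apply: eq_bigr => y _; rewrite inE; case: (P y).
Qed.

End S.

Theorem mainTheorem3 (T : finType) (e : rel T) (u v : T) :
  simple_graph e -> inX e u -> inX e v -> u != v -> ~~ e u v ->
  cM2 e <= cM2 (add_edge e u v) /\
  (cM2 (add_edge e u v) = cM2 e ->
     [/\ deg e u = deg e v, outdegF e u = indegF e u & outdegF e v = indegF e v]).
Proof.
move=> [sym irr] Xu Xv uv nuv.
have H : \sum_(x : T) \sum_(y : T) (F (add_edge e u v) x y + ((x == u) * Au e u y + (y == u) * Au e u x + (x == v) * Av e v y + (y == v) * Av e v x))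
  = \sum_(x : T) \sum_(y : T) (F e x y + ((x == u) * Qu e u y + (y == u) * Qu e u x + (x == v) * Qv e v y + (y == v) * Qv e v x
       + (x == u) * (y == v) * N e u v + (x == v) * (y == u) * N e u v)).
  by apply: eq_bigr => x _; apply: eq_bigr => y _; apply: pointwise.
move: H.
under eq_bigr => x _ do rewrite !big_split /=.
under [in X in _ = X]eq_bigr => x _ do rewrite !big_split /=.
rewrite !big_split /= !L1 !L2 !L3.
rewrite /Au /Qu /Av /Qv !sumcard -/(indegF e u) -/(indegF e v).
set S' := \sum_(x : T) \sum_(y : T) _.
set S := \sum_(x : T) \sum_(y : T) _.
set A := 2 * deg e u + 1.  set B := 2 * deg e v + 1.
set lu := #|_|. set lv := #|_|.
move: Xu Xv; rewrite /inX => Xu Xv.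
have ou : outdegF e u <= lu.
  apply: subset_leq_card; apply/subsetP => w; rewrite !inE => /andP[-> /ltnW ->] //.
have ov : outdegF e v <= lv.
  apply: subset_leq_card; apply/subsetP => w; rewrite !inE => /andP[-> /ltnW ->] //.
have iu : indegF e u <= lu by apply: leq_trans ou.
have iv : indegF e v <= lv by apply: leq_trans ov.
have m1 : indegF e u * A <= lu * A by rewrite leq_mul2r iu orbT.
have m2 : indegF e v * B <= lv * B by rewrite leq_mul2r iv orbT.
have b1 := mulnBl lu (indegF e u) A.
have b2 := mulnBl lv (indegF e v) B.
move=> H.
set k := (lu - indegF e u) * A + (lv - indegF e v) * B + N e u v.
have HS : S' = k * 2 + S by rewrite /k; lia.
rewrite !Ssum -/S -/S' HS divnMDl //.
split; first by rewrite leq_addl.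
move=> /eqP; rewrite -{2}(add0n (S %/ 2)) eqn_add2r => /eqP k0.
have hN : N e u v = 0 by rewrite /k in k0; lia.
have h1 : (lu - indegF e u) * A = 0 by rewrite /k in k0; lia.
have h2 : (lv - indegF e v) * B = 0 by rewrite /k in k0; lia.
move/eqP: h1; rewrite muln_eq0 /A addn1 orbF => /eqP h1.
move/eqP: h2; rewrite muln_eq0 /B addn1 orbF => /eqP h2.
split; [|lia|lia].
move: hN; rewrite /N /absdiff => hN.
have : (deg e u).+1 ^ 2 = (deg e v).+1 ^ 2 by lia.
by move/eqP; rewrite eqn_exp2r // eqSS => /eqP.
Qed.
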